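(* Let $j_1,j_2,j_3$ be distinct complex numbers and use cyclic triples $(\alpha,\beta,\gamma)$ of $(1,2,3)$. Let $\mathcal E\subset\mathbb C^3(v_1,v_2,v_3)$ be the elliptic curve \[ v_1^2-v_2^2=j_1-j_2,\qquad v_1^2-v_3^2=j_1-j_3, \] and fix constants $c_\alpha$ with $c_\alpha^2=\dfrac{1}{(j_\alpha-j_\beta)(j_\alpha-j_\gamma)}$. Let $M=\mathbb C^6$ with coordinates $(S_1,S_2,S_3,T_1,T_2,T_3)$, and let \[ \hat{\mathcal S}=\Big\{(S,T,v)\in M\times\mathcal E:\ \sum_{\alpha=1}^3 c_\alpha\big(v_\beta v_\gamma T_\alpha+v_\alpha S_\alpha\big)=0\Big\}. \] Then $\hat{\mathcal S}$ is an $8$-fold covering of $M$ under the canonical projection $\pi:\hat{\mathcal S}\to M$, $(S,T,v)\mapsto(S,T)$; that is, to a (generic) point of $M$ there correspond eight points of $\hat{\mathcal S}$. *)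

(* Defs.v *)
From HB Require Import structures.
From mathcomp Require Import all_boot all_order all_algebra.
From mathcomp Require Export mpoly.
Set Implicit Arguments. Unset Strict Implicit. Unset Printing Implicit Defensive.
Import Order.TTheory GRing.Theory Num.Theory.
Local Open Scope ring_scope.

Definition on_curve (C : numClosedFieldType) (j1 j2 j3 : C) (v : C * C * C) : Prop :=
  let: (v1, v2, v3) := v in
  v1 ^+ 2 - v2 ^+ 2 = j1 - j2 /\ v1 ^+ 2 - v3 ^+ 2 = j1 - j3.

Definition hatS_eq (C : numClosedFieldType) (c1 c2 c3 : C) (x : 'I_6 -> C)
    (v : C * C * C) : Prop :=
  let: (v1, v2, v3) := v in
  let S1 := x (inord 0) in let S2 := x (inord 1) in let S3 := x (inord 2) in
  let T1 := x (inord 3) in let T2 := x (inord 4) in let T3 := x (inord 5) in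
  c1 * (v2 * v3 * T1 + v1 * S1) + c2 * (v3 * v1 * T2 + v2 * S2)
    + c3 * (v1 * v2 * T3 + v3 * S3) = 0.

Definition fibre (C : numClosedFieldType) (j1 j2 j3 c1 c2 c3 : C) (x : 'I_6 -> C)
    (v : C * C * C) : Prop :=
  on_curve j1 j2 j3 v /\ hatS_eq c1 c2 c3 x v.

Definition fibre_card (C : numClosedFieldType) (j1 j2 j3 c1 c2 c3 : C)
    (x : 'I_6 -> C) (n : nat) : Prop :=
  exists s : seq (C * C * C),
    [/\ uniq s, size s = n & forall v, fibre j1 j2 j3 c1 c2 c3 x v <-> v \in s].

(* Main.v *)
Require Import Defs.
From HB Require Import structures.
From mathcomp Require Import all_boot all_order all_algebra all_field.
From mathcomp Require Import mpoly.
From mathcomp.algebra_tactics Require Import ring.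
Set Implicit Arguments. Unset Strict Implicit. Unset Printing Implicit Defensive.
Import Order.TTheory GRing.Theory Num.Theory.
Local Open Scope ring_scope.

Lemma map_resultant_gen (aR rR : nzRingType) (f : {rmorphism aR -> rR}) (p q : {poly aR}) :
    f (lead_coef p) != 0 -> f (lead_coef q) != 0 ->
  f (resultant p q)= resultant (map_poly f p) (map_poly f q).
Proof.
move=> nz_fp nz_fq; rewrite /resultant /Sylvester_mx !size_map_poly_id0 //.
rewrite -det_map_mx /= map_col_mx; congr (\det (col_mx _ _));
  by apply: map_lin1_mx => v; rewrite map_poly_rV rmorphM /= map_rVpoly.
Qed.

Section Gen.
Variable K : comNzRingType.
Variables A2 A1 A0 B4 B3 B1 B0 R4 R2 R0 : K.

Definition fc (i : nat) : K :=
  let P4 := A2 ^+ 2 in let P3 := (A2 * A1) *+ 2 in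
  let P2 := A1 ^+ 2 + (A2 * A0) *+ 2 in let P1 := (A1 * A0) *+ 2 in
  let P0 := A0 ^+ 2 in
  match i with
  | 8 => P4 * R4 - B4 ^+ 2
  | 7 => P3 * R4 - (B4 * B3) *+ 2
  | 6 => P2 * R4 + P4 * R2 - B3 ^+ 2
  | 5 => P1 * R4 + P3 * R2 - (B4 * B1) *+ 2
  | 4 => P0 * R4 + P2 * R2 + P4 * R0 - ((B4 * B0) *+ 2 + (B3 * B1) *+ 2)
  | 3 => P1 * R2 + P3 * R0 - (B3 * B0) *+ 2
  | 2 => P0 * R2 + P2 * R0 - B1 ^+ 2
  | 1 => P1 * R0 - (B1 * B0) *+ 2
  | 0 => P0 * R0 - B0 ^+ 2
  | _ => 0
  end.

Definition FP : {poly K} := \poly_(i < 9) fc i.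

Definition ae z := A2 * z ^+ 2 + A1 * z + A0.
Definition be z := B4 * z ^+ 4 + B3 * z ^+ 3 + B1 * z + B0.
Definition re z := R4 * z ^+ 4 + R2 * z ^+ 2 + R0.

Lemma FP_horner z : FP.[z] = ae z ^+ 2 * re z - be z ^+ 2.
Proof.
rewrite /FP horner_poly !big_ord_recr big_ord0 /= /ae /be /re. ring.
Qed.

Lemma FP_deriv : FP^`() = \poly_(i < 8) (fc i.+1 *+ i.+1).
Proof.
apply/polyP => i; rewrite coef_deriv !coef_poly.
case: i => [|[|[|[|[|[|[|[|i]]]]]]]] //=; exact: mul0rn.
Qed.

Lemma FPd_horner z : FP^`().[z] =
  (ae z * (A2 * z *+ 2 + A1)) *+ 2 * re z + ae z ^+ 2 * (R4 * z ^+ 3 *+ 4 + R2 * z *+ 2)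
  - (be z * (B4 * z ^+ 3 *+ 4 + B3 * z ^+ 2 *+ 3 + B1)) *+ 2.
Proof.
rewrite FP_deriv horner_poly !big_ord_recr big_ord0 /= /ae /be /re. ring.
Qed.

End Gen.

Lemma fc_map (K K' : comNzRingType) (f : {rmorphism K -> K'}) A2 A1 A0 B4 B3 B1 B0 R4 R2 R0 i :
  f (fc A2 A1 A0 B4 B3 B1 B0 R4 R2 R0 i) =
  fc (f A2) (f A1) (f A0) (f B4) (f B3) (f B1) (f B0) (f R4) (f R2) (f R0) i.
Proof.
by case: i => [|[|[|[|[|[|[|[|[|i]]]]]]]]];
  rewrite /fc ?rmorph0 // !(rmorphB, rmorphD, rmorphM, rmorphXn, rmorphMn).
Qed.

Lemma coef_gt_size (R : nzRingType) (p : {poly R}) i : p`_i != 0 -> (i < size p)%N.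
Proof. by rewrite ltnNge; apply: contra => /leq_sizeP ->. Qed.

Section Roots.
Variable C : closedFieldType.
Variables A2 A1 A0 B4 B3 B1 B0 R4 R2 R0 : C.
Local Notation F := (FP A2 A1 A0 B4 B3 B1 B0 R4 R2 R0).
Local Notation f := (fc A2 A1 A0 B4 B3 B1 B0 R4 R2 R0).

Lemma FP_size (K : comNzRingType) (a2 a1 a0 b4 b3 b1 b0 r4 r2 r0 : K) :
  fc a2 a1 a0 b4 b3 b1 b0 r4 r2 r0 8 != 0 ->
  size (FP a2 a1 a0 b4 b3 b1 b0 r4 r2 r0) = 9%N /\
  lead_coef (FP a2 a1 a0 b4 b3 b1 b0 r4 r2 r0) = fc a2 a1 a0 b4 b3 b1 b0 r4 r2 r0 8.
Proof.
move=> h8.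
have hs : size (FP a2 a1 a0 b4 b3 b1 b0 r4 r2 r0) = 9%N.
  apply/eqP; rewrite eqn_leq size_poly /=.
  by apply: coef_gt_size; rewrite coef_poly.
by split=> //; rewrite /lead_coef hs coef_poly.
Qed.

Lemma FPd_lead (K : comNzRingType) (a2 a1 a0 b4 b3 b1 b0 r4 r2 r0 : K) :
  fc a2 a1 a0 b4 b3 b1 b0 r4 r2 r0 8 *+ 8 != 0 ->
  lead_coef (FP a2 a1 a0 b4 b3 b1 b0 r4 r2 r0)^`() = fc a2 a1 a0 b4 b3 b1 b0 r4 r2 r0 8 *+ 8.
Proof.
move=> h8; rewrite FP_deriv.
have hs : size (\poly_(i < 8) (fc a2 a1 a0 b4 b3 b1 b0 r4 r2 r0 i.+1 *+ i.+1)) = 8%N.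
  apply/eqP; rewrite eqn_leq size_poly /=.
  by apply: coef_gt_size; rewrite coef_poly.
by rewrite /lead_coef hs coef_poly.
Qed.

Hypothesis h8 : f 8 != 0.
Hypothesis h0 : f 0 != 0.
Hypothesis hres : resultant F F^`() != 0.

Lemma F_sep : coprimep F F^`().
Proof.
rewrite coprimep_def; move: hres; rewrite resultant_eq0 -leqNgt => hle.
have hF : F != 0 by rewrite -size_poly_eq0 (FP_size h8).1.
rewrite eqn_leq hle /= lt0n size_poly_eq0 gcdp_eq0 negb_and hF //.
Qed.

Lemma F_root_nz z : root F z -> z != 0.
Proof.
move=> /eqP hz; apply/eqP => z0; move: hz; rewrite z0 horner_coef0 coef_poly /=.
by apply/eqP.
Qed.

Lemma F_root_ae z : root F z -> ae A2 A1 A0 z != 0.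
Proof.
move=> hz; apply/eqP => hae.
have hbe : be B4 B3 B1 B0 z = 0.
  move/eqP: hz; rewrite FP_horner hae expr0n /= mul0r sub0r => /eqP.
  by rewrite oppr_eq0 expf_eq0 /= => /eqP.
have := coprimep_root F_sep hz; rewrite FPd_horner hae hbe.
by rewrite !(mul0r, mulr0, mul0rn, expr0n, subrr, addr0) /= eqxx.
Qed.

Lemma F_roots : exists rs : seq C, [/\ uniq rs, size rs = 8%N &
  forall z, root F z = (z \in rs)].
Proof.
have [rs Drs] := closed_field_poly_normal F.
have [hs hl] := FP_size h8.
have hl0 : lead_coef F != 0 by rewrite hl.
exists rs; split.
- have := F_sep; rewrite [in X in coprimep X _]Drs [in X in X^`()]Drs derivZ.
  rewrite coprimepZl // coprimepZr // => hc.
  by rewrite -separable_prod_XsubC unlock.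
- by move: hs; rewrite Drs size_scale // size_prod_XsubC => -[].
- by move=> z; rewrite Drs rootZ // root_prod_XsubC.
Qed.

End Roots.

Definition FB (K : comNzRingType) (a b q k1 k2 k3 k4 k5 k6 : K) :=
  FP (k1+k2) k3 (a*(k2-k1)) k4 (k5+k6) (a*(k5-k6)) (-(a^+2*k4)) q (a*q*+2 - b) (q*a^+2).
Definition fcB (K : comNzRingType) (a b q k1 k2 k3 k4 k5 k6 : K) :=
  fc (k1+k2) k3 (a*(k2-k1)) k4 (k5+k6) (a*(k5-k6)) (-(a^+2*k4)) q (a*q*+2 - b) (q*a^+2).

Lemma fcB_map (K K' : comNzRingType) (f : {rmorphism K -> K'}) a b q k1 k2 k3 k4 k5 k6 i :
  f (fcB a b q k1 k2 k3 k4 k5 k6 i) = fcB (f a) (f b) (f q) (f k1) (f k2) (f k3) (f k4) (f k5) (f k6) i.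
Proof.
by rewrite /fcB fc_map !(rmorphB, rmorphD, rmorphM, rmorphXn, rmorphMn, rmorphN).
Qed.

Section Fib.
Variable C : numFieldType.
Variables (a b c1 c2 c3 S1 S2 S3 T1 T2 T3 : C).
Let k1 := c1 / 2 * T1.
Let k2 := c2 / 2 * T2.
Let k3 := c3 * S3.
Let k4 := c3 / 4 * T3.
Let k5 := c1 / 2 * S1.
Let k6 := c2 / 2 * S2.
Let q := (4 : C)^-1.
Lemma two_nz : (2 : C) != 0. Proof. by rewrite pnatr_eq0. Qed.
Lemma four_nz : (4 : C) != 0. Proof. by rewrite pnatr_eq0. Qed.
Definition aeF z := ae (k1+k2) k3 (a*(k2-k1)) z.
Definition beF z := be k4 (k5+k6) (a*(k5-k6)) (-(a^+2*k4)) z.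
Definition FF := FB a b q k1 k2 k3 k4 k5 k6.
Definition LL v1 v2 v3 := c1 * (v2 * v3 * T1 + v1 * S1) + c2 * (v3 * v1 * T2 + v2 * S2)
    + c3 * (v1 * v2 * T3 + v3 * S3).

Lemma FF_horner z : FF.[z] = aeF z ^+ 2 * ((z ^+ 2 + a) ^+ 2 / 4 - b * z ^+ 2) - beF z ^+ 2.
Proof.
rewrite /FF /FB FP_horner /re /aeF /beF; congr (_ * _ - _).
rewrite /q; by field.
Qed.


Lemma fib_to_root v1 v2 v3 :
  v1 ^+ 2 - v2 ^+ 2 = a -> v1 ^+ 2 - v3 ^+ 2 = b -> LL v1 v2 v3 = 0 -> a != 0 ->
  [/\ v1 + v2 != 0, FF.[v1 + v2] = 0,
      aeF (v1 + v2) * (v1 + v2) * v3 + beF (v1 + v2) = 0,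
      v1 = ((v1 + v2) ^+ 2 + a) / ((v1 + v2) *+ 2) &
      v2 = ((v1 + v2) ^+ 2 - a) / ((v1 + v2) *+ 2)].
Proof.
move=> ha hb hL a0.
have hp : v1 + v2 != 0.
  by apply: contraNneq a0 => hp; rewrite -ha subr_sqr hp mulr0.
have hid : aeF (v1 + v2) * (v1 + v2) * v3 + beF (v1 + v2) = (v1 + v2) ^+ 2 * LL v1 v2 v3.
  rewrite /aeF /beF /ae /be /LL /k1 /k2 /k3 /k4 /k5 /k6 -ha.
  field; by rewrite ?two_nz ?four_nz.
have h2 : aeF (v1 + v2) * (v1 + v2) * v3 + beF (v1 + v2) = 0 by rewrite hid hL mulr0.
have h2p : (v1 + v2) *+ 2 != 0 by rewrite -mulr_natr mulf_neq0 ?two_nz.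
split => //.
- rewrite FF_horner.
  have -> : ((v1 + v2) ^+ 2 + a) ^+ 2 / 4 - b * (v1 + v2) ^+ 2 = ((v1 + v2) * v3) ^+ 2.
    rewrite -ha -hb; by field.
  have -> : beF (v1 + v2) = - (aeF (v1 + v2) * (v1 + v2) * v3).
    by apply/eqP; rewrite -subr_eq0 opprK addrC h2.
  ring.
- apply: (mulIf h2p); rewrite divfK // -ha. ring.
- apply: (mulIf h2p); rewrite divfK // -ha. ring.
Qed.

Definition vpt z := (((z ^+ 2 + a) / (z *+ 2)), ((z ^+ 2 - a) / (z *+ 2)),
   - beF z / (aeF z * z)).

Lemma root_to_fib z : z != 0 -> aeF z != 0 -> FF.[z] = 0 ->
  let: (v1, v2, v3) := vpt z in
  [/\ v1 ^+ 2 - v2 ^+ 2 = a, v1 ^+ 2 - v3 ^+ 2 = b & LL v1 v2 v3 = 0].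
Proof.
move=> z0 ha hF /=.
have hb2 : beF z ^+ 2 = aeF z ^+ 2 * ((z ^+ 2 + a) ^+ 2 / 4 - b * z ^+ 2).
  by apply/eqP; rewrite eq_sym -subr_eq0 -FF_horner hF.
split.
- field; by rewrite ?z0.
- have -> : (- beF z / (aeF z * z)) ^+ 2 = beF z ^+ 2 / (aeF z * z) ^+ 2.
    by rewrite expr_div_n sqrrN.
  rewrite hb2. field.
  by rewrite ?z0 ?ha.
- have key : forall w, LL ((z ^+ 2 + a) / (z *+ 2)) ((z ^+ 2 - a) / (z *+ 2)) w
    = (aeF z * z * w + beF z) / z ^+ 2.
    move=> w; rewrite /aeF /beF /ae /be /LL /k1 /k2 /k3 /k4 /k5 /k6.
    field; by rewrite ?z0.
  rewrite key.
  by rewrite [aeF z * z * _]mulrC divfK ?mulf_neq0 // addNr mul0r.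
Qed.

Lemma vpt_sum z : z != 0 -> (vpt z).1.1 + (vpt z).1.2 = z.
Proof. move=> z0 /=; field; by rewrite ?z0. Qed.

End Fib.

Section Wit.
Variable C : numClosedFieldType.
Variables a b f : C.
Hypotheses (a0 : a != 0) (b0 : b != 0) (f0 : f != 0).
Let q := (4 : C)^-1.
Definition Dl := (b + f ^+ 2) ^+ 2 - a * b *+ 2 + a ^+ 2 + a * f ^+ 2 *+ 2.
Hypothesis D0 : Dl != 0.
Local Notation F := (FB a b q 1 0 0 0 f 0).

Lemma wit_alg z : F.[z] = 0 -> F^`().[z] = 0 -> False.
Proof.
rewrite /FB FP_horner FPd_horner /ae /be /re => e1 e2.
have z0 : z != 0.
  apply/eqP => z0; move: e1; rewrite z0 /q => /eqP; apply/negP.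
  rewrite !(expr0n, mulr0, mul0r, addr0, add0r, subr0, sub0r, oppr0) /=.
  by rewrite mulrN1 sqrrN !mulf_neq0 ?expf_neq0 ?invr_eq0 ?pnatr_eq0.
pose qq := z ^+ 2.
have qq0 : qq != 0 by rewrite expf_neq0.
pose w := (qq ^+ 2 + a ^+ 2) / qq.
pose H := (w - a *+ 2) * (q * (w + a *+ 2) - b) - f ^+ 2 * (w + a *+ 2).
pose H' := q * w *+ 2 - b - f ^+ 2.
have id1 : (1 + 0) * z ^+ 2 + 0 * z + a * (0 - 1) = z ^+ 2 - a by ring.
rewrite id1 in e1 e2.
have hH : H = 0.
  have : qq ^+ 2 * H = 0.
    rewrite -e1 /H /w /qq; field; by rewrite ?z0.
  by move/eqP; rewrite mulf_eq0 expf_eq0 (negbTE qq0) /= => /eqP.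
have hH' : H' * (qq ^+ 2 - a ^+ 2) = 0.
  have : (z *+ 2) * ((qq *+ 2) * H + H' * (qq ^+ 2 - a ^+ 2)) = 0.
    rewrite -e2 /H /H' /w /qq; field; by rewrite ?z0.
  rewrite hH mulr0 add0r => /eqP; rewrite mulf_eq0 => /orP [|/eqP //].
  by rewrite -mulr_natr mulf_eq0 (negbTE z0) pnatr_eq0.
have hHD : H = H' ^+ 2 - Dl by rewrite /H /H' /Dl /q; field.
move/eqP: hH'; rewrite mulf_eq0 => /orP [/eqP hH'0|].
  move: D0; have -> : Dl = H' ^+ 2 - H by rewrite hHD; ring.
  by rewrite hH hH'0 expr0n /= subrr eqxx.
rewrite subr_sqr mulf_eq0 => /orP [] /eqP hq.
  have hw : w = a *+ 2.
    rewrite /w; have -> : qq = a by apply/eqP; rewrite -subr_eq0 hq.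
    by field.
  move: hH; rewrite /H hw => /eqP; apply/negP.
  have -> : (a *+ 2 - a *+ 2) * (q * (a *+ 2 + a *+ 2) - b) - f ^+ 2 * (a *+ 2 + a *+ 2)
     = - (f ^+ 2 * a * 4) by ring.
  by rewrite oppr_eq0 !mulf_neq0 ?expf_neq0 ?pnatr_eq0.
have hw : w = - a *+ 2.
  rewrite /w; have -> : qq = - a by apply/eqP; rewrite -subr_eq0 opprK hq.
  by field.
move: hH; rewrite /H hw => /eqP; apply/negP.
have -> : (- a *+ 2 - a *+ 2) * (q * (- a *+ 2 + a *+ 2) - b) - f ^+ 2 * (- a *+ 2 + a *+ 2)
   = a * b * 4 by rewrite /q; field.
by rewrite !mulf_neq0 ?pnatr_eq0.
Qed.

Lemma wit_ok : [/\ fcB a b q 1 0 0 0 f 0 8 != 0, fcB a b q 1 0 0 0 f 0 0 != 0 &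
   resultant F F^`() != 0].
Proof.
split.
- rewrite /fcB /fc /q.
  have -> : (1 + 0) ^+ 2 * (4 : C)^-1 - 0 ^+ 2 = 4^-1 by ring.
  by rewrite invr_eq0 pnatr_eq0.
- rewrite /fcB /fc /q.
  have -> : (a * (0 - 1)) ^+ 2 * ((4 : C)^-1 * a ^+ 2) - (- (a ^+ 2 * 0)) ^+ 2
     = a ^+ 4 / 4 by field.
  by rewrite mulf_neq0 ?expf_neq0 ?invr_eq0 ?pnatr_eq0.
- apply/negP; rewrite resultant_eq0 => hs.
  have /closed_rootP [z] : size (gcdp F F^`()) != 1%N by rewrite gtn_eqF.
  rewrite root_gcd => /andP [/eqP h1 /eqP h2].
  exact: (wit_alg h1 h2).
Qed.
End Wit.

Lemma exists_f (C : numClosedFieldType) (a b : C) : exists f : C, f != 0 /\ Dl a b f != 0.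
Proof.
have n1 : (1 : C) != 0 by rewrite oner_eq0.
have n2 : (2 : C) != 0 by rewrite pnatr_eq0.
have n3 : (3 : C) != 0 by rewrite pnatr_eq0.
case: (eqVneq (Dl a b 1) 0) => h1; last by exists 1.
case: (eqVneq (Dl a b 2) 0) => h2; last by exists 2.
case: (eqVneq (Dl a b 3) 0) => h3; last by exists 3.
have : (120 : C) = 5 * Dl a b 1 - 8 * Dl a b 2 + 3 * Dl a b 3 by rewrite /Dl; ring.
by rewrite h1 h2 h3 !mulr0 subrr addr0 => /eqP; rewrite pnatr_eq0.
Qed.

Lemma test_inord : ((inord 4 : 'I_6) == inord 3) = false.
Proof. by rewrite -val_eqE /= !inordK. Qed.

Lemma map_poly_polyn (K K' : nzRingType) (f : {rmorphism K -> K'}) n (E : nat -> K) :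
  map_poly f (\poly_(i < n) E i) = \poly_(i < n) f (E i).
Proof.
apply/polyP => i; rewrite coef_map !coef_poly; case: ifP => _ //; exact: rmorph0.
Qed.

Section Main.
Variable C : numClosedFieldType.
Variables (a b c1 c2 c3 S1 S2 S3 T1 T2 T3 : C).
Hypothesis a0 : a != 0.
Local Notation F := (FF a b c1 c2 c3 S1 S2 S3 T1 T2 T3).
Local Notation fF := (fcB a b 4^-1 (c1 / 2 * T1) (c2 / 2 * T2) (c3 * S3) (c3 / 4 * T3) (c1 / 2 * S1) (c2 / 2 * S2)).
Hypotheses (h8 : fF 8 != 0) (h0 : fF 0 != 0) (hres : resultant F F^`() != 0).

Lemma main_gen : exists s : seq (C * C * C), [/\ uniq s, size s = 8%N &
  forall v1 v2 v3, ((v1 ^+ 2 - v2 ^+ 2 = a /\ v1 ^+ 2 - v3 ^+ 2 = b) /\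
     LL c1 c2 c3 S1 S2 S3 T1 T2 T3 v1 v2 v3 = 0) <-> (v1, v2, v3) \in s].
Proof.
have [rs [urs srs hrs]] := F_roots h8 hres.
have rnz : forall z, z \in rs -> z != 0.
  by move=> z; rewrite -hrs; apply: (F_root_nz h0).
have rae : forall z, z \in rs -> aeF a c1 c2 c3 S3 T1 T2 z != 0.
  by move=> z; rewrite -hrs; apply: (F_root_ae h8 hres).
exists (map (vpt a c1 c2 c3 S1 S2 S3 T1 T2 T3) rs); split.
- rewrite map_inj_in_uniq // => z1 z2 hz1 hz2 e.
  by rewrite -(vpt_sum a c1 c2 c3 S1 S2 S3 T1 T2 T3 (rnz _ hz1)) e (vpt_sum a c1 c2 c3 S1 S2 S3 T1 T2 T3 (rnz _ hz2)).
- by rewrite size_map.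
move=> v1 v2 v3; split.
- move=> [[ha hb] hL].
  have [hp hF hlin e1 e2] := fib_to_root ha hb hL a0.
  apply/mapP; exists (v1 + v2); first by rewrite -hrs; apply/eqP.
  have hin : v1 + v2 \in rs by rewrite -hrs; apply/eqP.
  rewrite /vpt -e1 -e2; congr (_, _, _).
  apply: (mulIf (mulf_neq0 (rae _ hin) hp)).
  rewrite divfK ?mulf_neq0 ?rae //; apply/eqP.
  by rewrite mulrC -subr_eq0 opprK hlin.
- move=> /mapP [z hz]; rewrite /vpt => -[-> -> ->].
  have := @root_to_fib C a b c1 c2 c3 S1 S2 S3 T1 T2 T3 z (rnz _ hz) (rae _ hz).
  have hF : F.[z] = 0 by apply/eqP; rewrite -/(root _ _) hrs.
  by rewrite /vpt => /(_ hF) [? ? ?].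
Qed.
End Main.

Unset Implicit Arguments.
Set Strict Implicit.

Theorem corollary5 (C : numClosedFieldType) (j1 j2 j3 c1 c2 c3 : C)
  (h12 : j1 != j2) (h13 : j1 != j3) (h23 : j2 != j3)
  (hc1 : c1 ^+ 2 = ((j1 - j2) * (j1 - j3))^-1)
  (hc2 : c2 ^+ 2 = ((j2 - j3) * (j2 - j1))^-1)
  (hc3 : c3 ^+ 2 = ((j3 - j1) * (j3 - j2))^-1) :
  exists P : {mpoly C[6]}, P != 0 /\
    forall x : 'I_6 -> C, P.@[x] != 0 -> fibre_card j1 j2 j3 c1 c2 c3 x 8.
Proof.
pose a := j1 - j2; pose b := j1 - j3.
have a0 : a != 0 by rewrite subr_eq0.
have b0 : b != 0 by rewrite subr_eq0.
have c10 : c1 != 0.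
  apply/eqP => c0; move: hc1; rewrite c0 expr0n /= => /esym /eqP.
  by rewrite invr_eq0 mulf_eq0 !subr_eq0 (negbTE h12) (negbTE h13).
pose km (i : nat) (c : C) : {mpoly C[6]} := c%:MP * 'X_(inord i).
pose fM := fcB a%:MP b%:MP (4^-1)%:MP (km 3 (c1/2)) (km 4 (c2/2)) (km 2 c3)
   (km 5 (c3/4)) (km 0 (c1/2)) (km 1 (c2/2)).
pose FM := FB a%:MP b%:MP (4^-1)%:MP (km 3 (c1/2)) (km 4 (c2/2)) (km 2 c3)
   (km 5 (c3/4)) (km 0 (c1/2)) (km 1 (c2/2)).
have evk : forall x i c, (km i c).@[x] = c * x (inord i).
  by move=> x i c; rewrite /km mevalM mevalC mevalXU.
have evM : forall x i, (fM i).@[x] = fcB a b 4^-1 (c1 / 2 * x (inord 3)) (c2 / 2 * x (inord 4))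
    (c3 * x (inord 2)) (c3 / 4 * x (inord 5)) (c1 / 2 * x (inord 0)) (c2 / 2 * x (inord 1)) i.
  move=> x i; rewrite /fM (fcB_map (meval x)) /= !mevalC; congr fcB; apply: evk.
have mapF : forall x, map_poly (meval x) FM = FF a b c1 c2 c3 (x (inord 0)) (x (inord 1))
    (x (inord 2)) (x (inord 3)) (x (inord 4)) (x (inord 5)).
  move=> x; rewrite /FM /FB /FP map_poly_polyn; apply: eq_poly => i _.
  exact: evM.
have key : forall x, (fM 8%N).@[x] != 0 ->
    (resultant FM FM^`()).@[x] = resultant (map_poly (meval x) FM) (map_poly (meval x) FM)^`().
  move=> x hx.
  have hM : fM 8%N != 0 by apply: contraNneq hx => ->; rewrite meval0.
  have hM8 : (fM 8%N *+ 8).@[x] != 0.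
    by rewrite mevalMn mulrn_eq0 negb_or hx.
  have hM8' : fM 8%N *+ 8 != 0 by apply: contraNneq hM8 => ->; rewrite meval0.
  rewrite (@map_resultant_gen _ _ (meval x)) ?deriv_map //.
    by rewrite (FP_size hM).2.
  by rewrite (FPd_lead hM8').
exists (fM 8%N * fM 0%N * resultant FM FM^`()); split; last first.
  move=> x; rewrite !mevalM !mulf_eq0 !negb_or => /andP [/andP [h8 h0] hr].
  rewrite key // mapF in hr.
  rewrite !evM in h8 h0.
  have [s [us ss hs]] := main_gen a0 h8 h0 hr.
  exists s; split => // -[[v1 v2] v3].
  exact: hs.
have [f [f0 D0]] := exists_f a b.
pose x0 : 'I_6 -> C := fun i => if i == inord 3 then 2 / c1
  else if i == inord 0 then f * 2 / c1 else 0.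
suff : (fM 8%N * fM 0%N * resultant FM FM^`()).@[x0] != 0.
  by apply: contraNneq => ->; rewrite meval0.
have ne : forall i j : nat, (i < 6)%N -> (j < 6)%N -> i != j ->
    ((inord i : 'I_6) == inord j) = false.
  by move=> i j hi hj hij; rewrite -val_eqE /= !inordK // (negbTE hij).
have e3 : x0 (inord 3) = 2 / c1 by rewrite /x0 eqxx.
have e0 : x0 (inord 0) = f * 2 / c1 by rewrite /x0 ne // eqxx.
have ez : forall i, (i < 6)%N -> i != 3%N -> i != 0%N -> x0 (inord i) = 0.
  by move=> i hi h3 h0; rewrite /x0 !ne.
have ex : fcB a b 4^-1 (c1 / 2 * x0 (inord 3)) (c2 / 2 * x0 (inord 4))
    (c3 * x0 (inord 2)) (c3 / 4 * x0 (inord 5)) (c1 / 2 * x0 (inord 0))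
    (c2 / 2 * x0 (inord 1)) = fcB a b 4^-1 1 0 0 0 f 0.
  rewrite e3 e0 !ez // !mulr0; congr fcB; by field.
have eF : FF a b c1 c2 c3 (x0 (inord 0)) (x0 (inord 1)) (x0 (inord 2)) (x0 (inord 3))
    (x0 (inord 4)) (x0 (inord 5)) = FB a b 4^-1 1 0 0 0 f 0.
  rewrite /FF e3 e0 !ez // !mulr0; congr FB; by field.
have [w8 w0 wr] := wit_ok a0 b0 f0 D0.
have hx8 : (fM 8%N).@[x0] != 0 by rewrite evM ex.
rewrite !mevalM key // mapF eF !evM ex.
by rewrite !mulf_neq0.
Qed.
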